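(* Let $\Sigma$ be a finite set of tokens, let $q$ be a query, and let $\pi_\theta$, $\pi_{\theta_{old}}$, $\pi_{\theta_{ref}}$ be policies, i.e. conditional distributions assigning a positive probability $\pi(x \mid q, y)$ to each token $x\in\Sigma$ given $q$ and a prefix $y\in\Sigma^*$. Let $\mathbb{G}=(g_1,\dots,g_k)$ be a group of $k\ge 1$ nonempty trajectories $g_i\in\Sigma^*$ (e.g. sampled from $\pi_\theta(\cdot\mid q)$), with real outcome-level rewards $r_1,\dots,r_k$, and assume $r_{std}(\mathbb{G})\neq 0$. Then $$L_{GRPO}(\mathbb{G}) = L_{PRM}(\mathbb{G}),$$ where $$L_{GRPO}(\mathbb{G})=\frac{1}{\sum_{i=1}^k \mathrm{len}(g_i)}\sum_{i=1}^k\sum_{t=0}^{\mathrm{len}(g_i)-1}\big(P_{i,t}\, a_i - D_{i,t}\big),\qquad L_{PRM}(\mathbb{G})=\frac{1}{\sum_{i=1}^k \mathrm{len}(g_i)}\sum_{i=1}^k\sum_{t=0}^{\mathrm{len}(g_i)-1}\big(P_{i,t}\, A_{i,t} - D_{i,t}\big),$$ with all quantities as defined in the context.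
   Context: For a trajectory $g_i$, $\mathrm{len}(g_i)$ is its number of tokens, $g_i[t]$ (for $0\le t<\mathrm{len}(g_i)$) is its $t$-th token (0-indexed), and $g_i[:t]$ is the prefix consisting of its first $t$ tokens. $r_{mean}(\mathbb{G})=\frac1k\sum_{i=1}^k r_i$ and $r_{std}(\mathbb{G})$ is the standard deviation of $r_1,\dots,r_k$. The (outcome-level GRPO) advantage is $a_i=(r_i-r_{mean}(\mathbb{G}))/r_{std}(\mathbb{G})$. For $0\le t<\mathrm{len}(g_i)$: $P_{i,t}=\dfrac{\pi_\theta(g_i[t]\mid q,g_i[:t])}{\pi_{\theta_{old}}(g_i[t]\mid q,g_i[:t])}$ and $D_{i,t}=\dfrac{\pi_{\theta_{ref}}(g_i[t]\mid q,g_i[:t])}{\pi_\theta(g_i[t]\mid q,g_i[:t])}-\ln\dfrac{\pi_{\theta_{ref}}(g_i[t]\mid q,g_i[:t])}{\pi_\theta(g_i[t]\mid q,g_i[:t])}-1$. Process steps: the trajectories of $\mathbb{G}$ form a prefix tree whose nodes (''process sets'') are sets of trajectories sharing a common prefix. For $0\le t<\mathrm{len}(g_i)$, the process set containing token $t$ of $g_i$ is $\lambda^{(i,t)}=\{g_j\in\mathbb{G} : \mathrm{len}(g_j)>t \text{ and } g_j[:t+1]=g_i[:t+1]\}$ (the set of trajectories that agree with $g_i$ on its first $t+1$ tokens). The step-level (Monte Carlo) reward of a process set $\lambda$ is $\hat R(\lambda)=\frac{1}{|\lambda|}\sum_{g_j\in\lambda} r_j$; the token-level reward is $R_{i,t}=\hat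 R(\lambda^{(i,t)})$, and the step-level advantage is $A_{i,t}=(R_{i,t}-r_{mean}(\mathbb{G}))/r_{std}(\mathbb{G})$. *)

(* Defs.v *)
From HB Require Import structures.
From mathcomp Require Import all_boot all_order all_algebra.
From mathcomp Require Import reals exp.
Set Implicit Arguments. Unset Strict Implicit. Unset Printing Implicit Defensive.
Import Order.TTheory GRing.Theory Num.Theory.
Local Open Scope ring_scope.

Section GRPO.
Variables (R : realType) (Sigma : finType) (Query : Type).

(* A policy: pi q y x = probability of token x given query q and prefix y. *)
Definition is_policy (pi : Query -> seq Sigma -> Sigma -> R) : Prop :=
  (forall q y x, 0 < pi q y x) /\ (forall q y, \sum_(x : Sigma) pi q y x = 1).

Variables (k : nat) (g : 'I_k -> seq Sigma) (r : 'I_k -> R).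

Definition tok (i : 'I_k) (t : 'I_(size (g i))) : Sigma := tnth (in_tuple (g i)) t.

Definition r_mean : R := (\sum_(i < k) r i) / k%:R.
Definition r_std : R := Num.sqrt ((\sum_(i < k) (r i - r_mean) ^+ 2) / k%:R).
Definition adv (i : 'I_k) : R := (r i - r_mean) / r_std.

Variables (q : Query) (pi_theta pi_old pi_ref : Query -> seq Sigma -> Sigma -> R).

Definition Pratio (i : 'I_k) (t : 'I_(size (g i))) : R :=
  pi_theta q (take t (g i)) (tok t) / pi_old q (take t (g i)) (tok t).

Definition Dkl (i : 'I_k) (t : 'I_(size (g i))) : R :=
  let rho := pi_ref q (take t (g i)) (tok t) / pi_theta q (take t (g i)) (tok t) in
  rho - ln rho - 1.

Definition proc_set (i : 'I_k) (t : nat) : {set 'I_k} :=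
  [set j | (t < size (g j))%N && (take t.+1 (g j) == take t.+1 (g i))].

Definition step_reward (lam : {set 'I_k}) : R :=
  (\sum_(j in lam) r j) / (#|lam|%:R).

Definition tok_reward (i : 'I_k) (t : nat) : R := step_reward (proc_set i t).

Definition step_adv (i : 'I_k) (t : nat) : R := (tok_reward i t - r_mean) / r_std.

Definition total_len : nat := \sum_(i < k) size (g i).

Definition L_GRPO : R :=
  (\sum_(i < k) \sum_(t < size (g i)) (Pratio t * adv i - Dkl t)) / (total_len%:R).

Definition L_PRM : R :=
  (\sum_(i < k) \sum_(t < size (g i)) (Pratio t * step_adv i t - Dkl t)) / (total_len%:R).

End GRPO.

(* Main.v *)
Require Import Defs.
From HB Require Import structures.
From mathcomp Require Import all_boot all_order all_algebra.
From mathcomp Require Import reals exp.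
From mathcomp Require Import ring.
Import Order.TTheory GRing.Theory Num.Theory.
Local Open Scope ring_scope.

Lemma key_lemma (R : realFieldType) (k : nat) (T : eqType) (P : pred 'I_k)
  (key : 'I_k -> T) (f r : 'I_k -> R) :
  (forall i j, P i -> P j -> key i = key j -> f i = f j) ->
  \sum_(i | P i) f i * ((\sum_(j in [set j | P j && (key j == key i)]) r j)
      / (#|[set j | P j && (key j == key i)]|%:R))
  = \sum_(i | P i) f i * r i.
Proof.
move=> Hf.
set S := fun i => [set j | P j && (key j == key i)].
rewrite (eq_bigr (fun i => \sum_(j in S i) f i * r j / #|S i|%:R)); last first.
  by move=> i _; rewrite mulr_suml mulr_sumr; apply: eq_bigr => j _; rewrite mulrA.
rewrite (exchange_big_dep P); last by move=> i j _; rewrite inE => /andP[].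
apply: eq_bigr => j Pj.
have SE : forall i, P i && (j \in S i) -> S i = S j /\ f i = f j.
  move=> i /andP[Pi]; rewrite inE => /andP[_ /eqP E]; split.
    by apply/setP => x; rewrite !inE E.
  by apply: Hf.
rewrite (eq_bigr (fun i => f j * r j / #|S j|%:R)); last first.
  by move=> i /SE [-> ->].
rewrite (eq_bigl (fun i => i \in S j)); last first.
  by move=> i /=; rewrite !inE Pj /= eq_sym.
rewrite sumr_const -[_ *+ _]mulr_natr.
have : (0 < #|S j|)%N by apply/card_gt0P; exists j; rewrite inE Pj eqxx.
move=> H; have H' : (#|S j|%:R : R) != 0 by rewrite pnatr_eq0 -lt0n.
by rewrite mulfVK.
Qed.

Theorem theorem1 (R : realType) (Sigma : finType) (Query : Type) (q : Query)
    (pi_theta pi_old pi_ref : Query -> seq Sigma -> Sigma -> R)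
    (Hth : @is_policy R Sigma Query pi_theta) (Hold : @is_policy R Sigma Query pi_old)
    (Href : @is_policy R Sigma Query pi_ref)
    (k : nat) (hk : (0 < k)%N)
    (g : 'I_k -> seq Sigma) (hg : forall i, (0 < size (g i))%N)
    (r : 'I_k -> R) (hstd : @r_std R k r != 0) :
  @L_GRPO R Sigma Query k g r q pi_theta pi_old pi_ref =
  @L_PRM R Sigma Query k g r q pi_theta pi_old pi_ref.
Proof.
pose Pn (i : 'I_k) (t : nat) : R :=
  match (insub t : option 'I_(size (g i))) with
  | Some t' => Pratio q pi_theta pi_old t'
  | None => 0 end.
pose N := (\sum_(i < k) size (g i))%N.
rewrite /L_GRPO /L_PRM; congr (_ / _).
apply/eqP; rewrite -subr_eq0 -sumrB; apply/eqP.
transitivity (\sum_(i < k) \sum_(t < N | (t < size (g i))%N)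
   Pn i t * (adv r i - step_adv g r i t)).
  apply: eq_bigr => i _.
  have hN : (size (g i) <= N)%N by rewrite /N (bigD1 i) //= leq_addr.
  rewrite -(big_ord_widen N (fun t => Pn i t * (adv r i - step_adv g r i t)) hN).
  rewrite -sumrB; apply: eq_bigr => t _.
  rewrite /Pn valK; ring.
rewrite (exchange_big_dep predT) //=.
apply: big1 => t _.
have Hf : forall i j, (t < size (g i))%N -> (t < size (g j))%N ->
    take t.+1 (g i) = take t.+1 (g j) -> Pn i t = Pn j t.
  move=> i j Hi Hj E.
  rewrite /Pn (@insubT _ _ 'I_(size (g i)) t Hi) (@insubT _ _ 'I_(size (g j)) t Hj) /Pratio /tok.
  set x0 := tnth (in_tuple (g i)) (Ordinal Hi).
  rewrite !(tnth_nth x0) /=.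
  have E1 : take t (g i) = take t (g j).
    by rewrite -(take_takel _ (leqnSn t)) E take_takel.
  have E2 : nth x0 (g i) t = nth x0 (g j) t.
    by rewrite -(nth_take x0 (ltnSn t)) E nth_take.
  by rewrite E1 -E2 -(tnth_nth x0 (in_tuple (g i)) (Ordinal Hi)).
have KL := @key_lemma R k _ (fun j => (t < size (g j))%N) (fun j => take t.+1 (g j))
   (fun i => Pn i t) r Hf.
clearbody Pn.
rewrite (eq_bigr (fun i => (Pn i t * r i - Pn i t * tok_reward g r i t) / r_std r)); last first.
  move=> i _; rewrite /adv /step_adv -mulrBl.
  have -> : forall a b m : R, (a - m) - (b - m) = a - b by move=> a b m; ring.
  by rewrite mulrA mulrBr.
rewrite -mulr_suml sumrB.
apply/eqP; rewrite mulf_eq0 subr_eq0; apply/orP; left; apply/eqP.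
by rewrite -KL.
Qed.
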